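(* Let $G$ be a finite abelian group, let $B\subseteq G$ be a regular Bohr set of rank $d$, and let $A\subseteq B$ have relative density $\mu_B(A)=\alpha$. Let $C>0$ be a constant such that $|B|\ge(1-\frac1{20})|B_{1+\delta}|$, where $\delta=1/(Cd)$, and let $B',B''\subseteq B_\delta$ be nonempty. Then either (1) there is an $x\in G$ such that $1_A*\mu_{B'}(x)\ge\frac{8}{10}\alpha$ and $1_A*\mu_{B''}(x)\ge\frac{8}{10}\alpha$; or (2) $\|1_A*\mu_{B'}\|_\infty\ge1.1\alpha$ or $\|1_A*\mu_{B''}\|_\infty\ge1.1\alpha$.
   Context: For a finite abelian group $G$ with dual group $\widehat G$, a Bohr set with generating set $\Gamma\subseteq\widehat G$ and radius $\rho\ge0$ is $B(\Gamma,\rho)=\{x\in G:|1-\gamma(x)|\le\rho\text{ for all }\gamma\in\Gamma\}$; its rank is $|\Gamma|$. For $B=B(\Gamma,\rho)$ and $\delta>0$, $B_\delta:=B(\Gamma,\delta\rho)$. A Bohr set $B$ of rank $d$ is regular if for all $|\delta|\le1/(100d)$, $(1-100d|\delta|)|B|\le|B_{1+\delta}|\le(1+100d|\delta|)|B|$. $\mu_B(A)=|A\cap B|/|B|$, $\mu_T=1_T/|T|$, $f*g(x)=\sum_yf(y)g(x-y)$, $\|f\|_\infty=\sup_x|f(x)|$. *)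

(* Defs.v *)
From HB Require Import structures.
From mathcomp Require Import all_boot all_order all_algebra.
From mathcomp Require Import complex.
From mathcomp Require Import reals.
Set Implicit Arguments. Unset Strict Implicit. Unset Printing Implicit Defensive.
Import Order.TTheory GRing.Theory Num.Theory.
Local Open Scope ring_scope.
Local Open Scope complex_scope.

Definition is_character (R : realType) (G : finZmodType) (g : {ffun G -> R[i]}) : Prop :=
  g 0 = 1 /\ forall x y : G, g (x + y) = g x * g y.

Definition char_set (R : realType) (G : finZmodType) (Gam : seq {ffun G -> R[i]}) : Prop :=
  uniq Gam /\ forall g, g \in Gam -> is_character g.

Definition bohr (R : realType) (G : finZmodType) (Gam : seq {ffun G -> R[i]}) (rho : R)
  : {set G} :=
  [set x | all (fun g : {ffun G -> R[i]} => `|1 - g x| <= rho%:C) Gam].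

Definition regular_bohr (R : realType) (G : finZmodType) (Gam : seq {ffun G -> R[i]}) (rho : R)
  : Prop :=
  let d := (size Gam)%:R : R in
  forall delta : R, `|delta| <= 1 / (100 * d) ->
    (1 - 100 * d * `|delta|) * (#|bohr Gam rho|)%:R <= (#|bohr Gam ((1 + delta) * rho)|)%:R
    /\ (#|bohr Gam ((1 + delta) * rho)|)%:R <= (1 + 100 * d * `|delta|) * (#|bohr Gam rho|)%:R.

Definition rel_density {R : realType} (G : finType) (B A : {set G}) : R :=
  (#|A :&: B|)%:R / (#|B|)%:R.

Definition indic {R : realType} (G : finType) (A : {set G}) : G -> R :=
  fun x => (x \in A)%:R.
Definition mu {R : realType} (G : finType) (T : {set G}) : G -> R :=
  fun x => (x \in T)%:R / (#|T|)%:R.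

Definition conv (R : realType) (G : finZmodType) (f g : G -> R) : G -> R :=
  fun x => \sum_(y : G) f y * g (x - y).

Definition supnorm {R : realType} (G : finType) (f : G -> R) : R :=
  \big[Num.max/0]_(x : G) `|f x|.

(* Main.v *)
Require Import Defs.
From HB Require Import structures.
From mathcomp Require Import all_boot all_order all_algebra.
From mathcomp Require Import complex.
From mathcomp Require Import reals.
From mathcomp Require fingroup cyclic.
From mathcomp Require Import ring lra.
Import Order.TTheory GRing.Theory Num.Theory.
Local Open Scope ring_scope.

Lemma char_norm (R : realType) (G : finZmodType) (g : {ffun G -> R[i]}) :
  is_character g -> forall x, `|g x| = 1.
Proof.
case=> g0 gM x.
have gX n : g (x *+ n) = g x ^+ n.
  elim: n => [|n IH]; first by rewrite mulr0n expr0.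
  by rewrite mulrS gM IH exprS.
have hn : x *+ #|G| = 0.
  rewrite -FinRing.zmodXgE.
  have := @cyclic.expg_cardG _ (fingroup.setT_group _) x (in_setT x).
  by rewrite cardsT.
have hG : (0 < #|G|)%N by apply/card_gt0P; exists 0.
have := gX #|G|; rewrite hn g0 => /(congr1 (fun z => `|z|)).
rewrite normr1 normrX => /esym/eqP.
by rewrite pexpr_eq1 ?normr_ge0 // => /eqP.
Qed.

Lemma bohr_add (R : realType) (G : finZmodType) (Gam : seq {ffun G -> R[i]})
  (r1 r2 : R) (a b : G) :
  char_set Gam -> a \in bohr Gam r1 -> b \in bohr Gam r2 ->
  a + b \in bohr Gam (r1 + r2).
Proof.
move=> [_ hch]; rewrite !inE => ha hb; apply/allP => g gin.
have h1 := allP ha g gin; have h2 := allP hb g gin.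
have hg := hch g gin; have [_ gM] := hg.
rewrite gM.
have -> : 1 - g a * g b = (1 - g a) + g a * (1 - g b).
  by rewrite mulrBr mulr1 addrA subrK.
apply: le_trans (ler_normD _ _) _.
rewrite normrM char_norm // mul1r rmorphD.
exact: lerD.
Qed.

Lemma final_arith (R : realType) (alpha s b a : R) :
  a + a < 19/10 * alpha * s -> alpha * ((1 - 1/20) * s) <= alpha * b ->
  alpha * b = a -> False.
Proof.
move=> h1 h2 h3.
have e : 19 / 10 * alpha * s = 2 * (alpha * ((1 - 1/20) * s)) by field.
rewrite e in h1; move: h1 h2 h3; set t := alpha * ((1 - 1/20) * s).
move=> h1 h2 h3; lra.
Qed.

Theorem lemma5p3 (R : realType) (G : finZmodType)
    (Gam : seq {ffun G -> R[i]}) (rho : R) (A B' B'' : {set G}) (C : R) :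
  char_set Gam -> 0 <= rho -> (0 < size Gam)%N ->
  regular_bohr Gam rho ->
  A \subset bohr Gam rho ->
  0 < C ->
  let d : R := (size Gam)%:R in
  let delta : R := 1 / (C * d) in
  let B := bohr Gam rho in
  let alpha : R := rel_density B A in
  (1 - 1/20 : R) * (#|bohr Gam ((1 + delta) * rho)|)%:R <= (#|B|)%:R ->
  B' \subset bohr Gam (delta * rho) -> B' != set0 ->
  B'' \subset bohr Gam (delta * rho) -> B'' != set0 ->
  let f1 : G -> R := conv (indic A) (mu B') in
  let f2 : G -> R := conv (indic A) (mu B'') in
  (exists x : G, 8/10 * alpha <= f1 x /\ 8/10 * alpha <= f2 x)
  \/ (11/10 * alpha <= supnorm f1 \/ 11/10 * alpha <= supnorm f2).
Proof.
move=> hchar hrho hd hreg hA hC d delta B alpha hS hB'1 hB'0 hB''1 hB''0 f1 f2.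
set S := bohr Gam ((1 + delta) * rho).
have dpos : 0 < d by rewrite /d ltr0n.
have delta_ge0 : 0 <= delta by rewrite /delta divr_ge0 // mulr_ge0 // ltW.
have supp : forall B0 : {set G}, B0 \subset bohr Gam (delta * rho) ->
    forall x, x \notin S -> conv (indic A) (mu B0) x = 0 :> R.
  move=> B0 hB0 x hx; rewrite /conv big1 // => y _; rewrite /indic /mu.
  case: (boolP (y \in A)) => yA; last by rewrite mul0r.
  case: (boolP (x - y \in B0)) => xyB; last by rewrite mul0r mulr0.
  exfalso; move/negP: hx; apply.
  have -> : x = y + (x - y) by rewrite addrC subrK.
  rewrite /S mulrDl mul1r.
  apply: bohr_add => //; first exact: (subsetP hA).
  exact: (subsetP hB0).
have total : forall B0 : {set G}, B0 != set0 ->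
    \sum_x conv (indic A) (mu B0) x = (#|A|)%:R :> R.
  move=> B0 hB0; rewrite /conv exchange_big /=.
  have inner y : \sum_x (mu B0 (x - y) : R) = 1.
    rewrite (reindex_inj (addIr y)) /=.
    under eq_bigr => x _ do rewrite addrK.
    rewrite /mu -mulr_suml.
    have -> : \sum_x ((x \in B0)%:R : R) = (#|B0|)%:R.
      rewrite -sumr_const [RHS]big_mkcond /=; apply: eq_bigr => x _.
      by case: (x \in B0).
    by rewrite mulfV // pnatr_eq0 -lt0n card_gt0.
  under eq_bigr => y _ do rewrite -mulr_sumr inner mulr1.
  rewrite -sumr_const [RHS]big_mkcond /=; apply: eq_bigr => x _.
  by rewrite /indic; case: (x \in A).
have sumS : forall B0 : {set G}, B0 != set0 -> B0 \subset bohr Gam (delta * rho) ->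
    \sum_(x in S) conv (indic A) (mu B0) x = (#|A|)%:R :> R.
  move=> B0 h0 h1; rewrite -(total B0 h0) [RHS](bigID (mem S)) /=.
  rewrite [X in _ = _ + X]big1 ?addr0 // => x hx.
  exact: supp.
have alpha_ge0 : 0 <= alpha by rewrite /alpha /rel_density divr_ge0.
have alphaB : alpha * (#|B|)%:R = (#|A|)%:R.
  rewrite /alpha /rel_density (setIidPl hA).
  case: (posnP #|B|) => hb.
    have hA0 : #|A| = 0%N.
      by apply/eqP; rewrite -leqn0 -hb subset_leq_card.
    by rewrite hb hA0 !mul0r.
  by rewrite divfK // pnatr_eq0 -lt0n.
have zeroS : (0 : G) \in S.
  rewrite inE; apply/allP => g gin.
  have [_ hch] := hchar; have [g0 _] := hch g gin.
  rewrite g0 subrr normr0.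
  have h0 : (0:R) <= (1 + delta) * rho by rewrite mulr_ge0 // addr_ge0.
  by rewrite -lecR in h0.
case: (boolP [exists x, (8/10 * alpha <= f1 x) && (8/10 * alpha <= f2 x)]).
  by move/existsP => [x /andP [h1 h2]]; left; exists x.
move=> hne.
case: (lerP (11/10 * alpha) (supnorm f1)) => h1; first by right; left.
case: (lerP (11/10 * alpha) (supnorm f2)) => h2; first by right; right.
exfalso.
have fb : forall (f : G -> R) x, f x <= supnorm f.
  move=> f x; apply: le_trans (real_ler_norm (num_real _)) _.
  exact: (le_bigmax 0 (fun x => `|f x|) x).
have key : forall x, f1 x + f2 x < 19/10 * alpha.
  move=> x; move/existsPn: hne => /(_ x); rewrite negb_and -!ltNge => /orP [] h.
    have := fb f2 x; lra.
  have := fb f1 x; lra.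
have hsum : \sum_(x in S) (f1 x + f2 x) < \sum_(x in S) (19/10 * alpha).
  apply: ltr_sum => //; apply/hasP; exists 0 => //; exact: mem_index_enum.
rewrite big_split /= sumS // sumS // sumr_const -[_ *+ #|S|]mulr_natr in hsum.
have hm := ler_wpM2l alpha_ge0 hS.
apply: (@final_arith R alpha (#|S|%:R) (#|B|%:R) (#|A|%:R)).
- exact hsum.
- exact hm.
- exact alphaB.
Qed.
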